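(* Let $k\ge 2$ and $n_0=2^{k+1}-1$. Let $T(n)=(3n+1)/2^{v_2(3n+1)}$ be the Syracuse map, $n_i=T^i(n_0)$ and $v_i=v_2(3n_{i-1}+1)$. Then $v_1=\cdots=v_k=1$, $n_k=2\cdot 3^k-1$, and $$v_{k+1}=\begin{cases}2 & \text{if } k \text{ is even},\\ 3+v_2(k+1) & \text{if } k \text{ is odd}.\end{cases}$$ In particular $v_{k+1}\ge 2$ always, and $v_{k+1}\ge 4$ whenever $k$ is odd.
   Context: $v_2$ is the $2$-adic valuation; $T^i$ the $i$-th iterate. *)

(* Defs.v *)
From mathcomp Require Import all_boot.
Set Implicit Arguments. Unset Strict Implicit. Unset Printing Implicit Defensive.

(* 2-adic valuation of a natural number (logn 2 0 = 0, irrelevant here since 3n+1 > 0). *)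
Definition v2 (m : nat) : nat := logn 2 m.

Definition syracuse (n : nat) : nat := (3 * n + 1) %/ 2 ^ v2 (3 * n + 1).

Definition syr_iter (i n0 : nat) : nat := iter i syracuse n0.

Definition syr_v (i n0 : nat) : nat := v2 (3 * syr_iter i.-1 n0 + 1).

(* Main.v *)
Require Import Defs.
From mathcomp Require Import all_boot.
From mathcomp Require Import zify.

Lemma odd21 q : odd (2 * q + 1).
Proof. by rewrite addn1 /= mul2n odd_double. Qed.
Lemma odd41 q : odd (4 * q + 1).
Proof. by rewrite (_ : 4 * q = 2 * (2 * q)) ?odd21 // mulnA. Qed.

Lemma v2_2odd e o : odd o -> v2 (2 ^ e * o) = e.
Proof.
move=> ho; have o0 : 0 < o by case: o ho.
rewrite /v2 lognM ?expn_gt0 // pfactorK // logn_coprime ?addn0 //.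
by rewrite coprime2n.
Qed.

Lemma pow3_mod8 c : 3 ^ (2 * c) %% 8 = 1 /\ 3 ^ (2 * c).+1 %% 8 = 3.
Proof.
have h : 3 ^ (2 * c) %% 8 = 1.
  by rewrite expnM -modnXm /= exp1n.
split=> //; by rewrite expnS -modnMm h.
Qed.

Lemma v2_odd_case m : odd m -> v2 (3 ^ m - 1) = 1.
Proof.
move=> hm; have [c ->] : exists c, m = (2 * c).+1.
  exists m./2; rewrite -{1}(odd_double_half m) hm; lia.
have [_ h] := pow3_mod8 c.
have -> : 3 ^ (2 * c).+1 - 1 = 2 ^ 1 * (4 * (3 ^ (2 * c).+1 %/ 8) + 1).
  have := divn_eq (3 ^ (2 * c).+1) 8; rewrite h; lia.
by apply: v2_2odd; rewrite odd41.
Qed.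

Lemma v2_even_case a b : odd b -> v2 (3 ^ (2 ^ a.+1 * b) - 1) = a + 3.
Proof.
move=> hb; elim: a => [|a IH].
  have [c eb] : exists c, b = (2 * c).+1.
    exists b./2; rewrite -{1}(odd_double_half b) hb; lia.
  have [_ h] := pow3_mod8 c.
  set x := 3 ^ b.
  have hx := divn_eq x 8; rewrite /x eb h -eb -/x in hx.
  set q := x %/ 8 in hx.
  have -> : 3 ^ (2 ^ 1 * b) - 1 = 2 ^ 3 * ((4 * q + 1) * (2 * q + 1)).
    rewrite mulnC expnM -/x hx; nia.
  by apply: v2_2odd; rewrite oddM odd21 odd41.
set c := 2 ^ a.+1 * b.
have ec : 2 ^ a.+2 * b = 2 * c by rewrite /c expnS mulnA.
have [h _] := pow3_mod8 (2 ^ a * b).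
have ec2 : c = 2 * (2 ^ a * b) by rewrite /c expnS mulnA.
set x := 3 ^ c in IH.
have hx := divn_eq x 8; rewrite /x ec2 h -ec2 -/x in hx.
set q := x %/ 8 in hx.
have -> : 3 ^ (2 ^ a.+2 * b) - 1 = (x - 1) * (x + 1).
  rewrite ec mulnC expnM -/x expnS expn1; clearbody q x; subst x; nia.
have x1 : 1 < x.
  have b0 : 0 < b by case: (b) hb.
  have c0 : 0 < c by rewrite /c muln_gt0 expn_gt0 b0.
  have : 3 ^ 1 <= 3 ^ c by rewrite leq_exp2l.
  rewrite /x; lia.
rewrite /v2 lognM; [|lia|lia].
rewrite -/(v2 _) IH.
have -> : x + 1 = 2 ^ 1 * (4 * q + 1) by lia.
rewrite -/(v2 _) v2_2odd ?odd41 //; lia.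
Qed.

Lemma syr_step j i : 0 < j ->
  v2 (3 * (2 ^ j.+1 * 3 ^ i - 1) + 1) = 1 /\
  syracuse (2 ^ j.+1 * 3 ^ i - 1) = 2 ^ j * 3 ^ i.+1 - 1.
Proof.
case: j => // j _.
have Y0 : 0 < 3 ^ i by rewrite expn_gt0.
have X0 : 0 < 2 ^ j by rewrite expn_gt0.
have e : 3 * (2 ^ j.+2 * 3 ^ i - 1) + 1 = 2 ^ 1 * (2 * (2 ^ j * 3 ^ i.+1 - 1) + 1).
  rewrite !expnS; nia.
have e2 : 2 ^ j.+1 * 3 ^ i.+1 - 1 = 2 * (2 ^ j * 3 ^ i.+1 - 1) + 1.
  rewrite !expnS; nia.
have hv : v2 (3 * (2 ^ j.+2 * 3 ^ i - 1) + 1) = 1 by rewrite e v2_2odd ?odd21.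
split=> //.
by rewrite /syracuse hv e mulKn // e2.
Qed.

Lemma iter_form k i : i <= k -> syr_iter i (2 ^ k.+1 - 1) = 2 ^ (k - i).+1 * 3 ^ i - 1.
Proof.
elim: i => [|i IH] hi; first by rewrite subn0 expn0 muln1.
rewrite /syr_iter iterS -/(syr_iter i _) IH; last by lia.
have -> : k - i = (k - i.+1).+1 by lia.
by case: (syr_step (k - i.+1).+1 i).
Qed.

Lemma v_form k i : i < k -> v2 (3 * syr_iter i (2 ^ k.+1 - 1) + 1) = 1.
Proof.
move=> hi; rewrite iter_form; last by lia.
by case: (syr_step (k - i) i) => //; lia.
Qed.

Theorem mainTheorem15 (k : nat) (hk : 2 <= k) :
  let n0 := 2 ^ k.+1 - 1 in
  (forall i, 1 <= i <= k -> syr_v i n0 = 1) /\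
  syr_iter k n0 = 2 * 3 ^ k - 1 /\
  syr_v k.+1 n0 = (if ~~ odd k then 2 else 3 + v2 k.+1) /\
  2 <= syr_v k.+1 n0 /\
  (odd k -> 4 <= syr_v k.+1 n0).
Proof.
move=> n0.
have Hk : syr_iter k n0 = 2 * 3 ^ k - 1 by rewrite /n0 iter_form // subnn.
have Hv : syr_v k.+1 n0 = (if ~~ odd k then 2 else 3 + v2 k.+1).
  rewrite /syr_v /= Hk.
  have P : 0 < 3 ^ k by rewrite expn_gt0.
  have -> : 3 * (2 * 3 ^ k - 1) + 1 = 2 * (3 ^ k.+1 - 1) by rewrite expnS; nia.
  rewrite /v2 lognM; last first.
  - by rewrite expnS; lia.
  - by [].
  rewrite -/(v2 _) -/(v2 _) (_ : v2 2 = 1); last by rewrite -(expn1 2) -(muln1 (2 ^ 1)) v2_2odd.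
  case ok: (odd k) => /=.
  - have [m cm em] := pfactor_coprime (p := 2) (n := k.+1) isT isT.
    rewrite coprime2n in cm.
    move: em; case E: (logn 2 k.+1) => [|a] em.
      by move: ok; rewrite -[odd k]negbK -/(odd k.+1) em expn0 muln1 cm.
    rewrite em mulnC v2_even_case //; lia.
  - by rewrite v2_odd_case //= ok.
split; first by move=> i /andP [h1 h2]; rewrite /syr_v v_form //; lia.
split; first exact: Hk.
rewrite Hv; split; first by [].
split; first by case: (odd k).
move=> ok; rewrite ok /=.
have : 0 < v2 k.+1.
  by rewrite /v2 logn_gt0 mem_primes /= dvdn2 /= ok.
lia.
Qed.
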